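(* Consider a solution $(s(t),x(t),o(t))$, $t\ge0$, of the networked SIR epidemic-opinion model described in the context, under the standing assumption stated there. For all $t\ge0$, $$R_{\min}(t)\le R_o(t)\le R_{\max}(t),$$ where $R_o(t)=\rho\big(G(o(t))^{-1}\tilde S(t)B(o(t))\big)$, $R_{\min}(t)=\rho\big(G(\mathbf 1_n)^{-1}\tilde S(t)B(\mathbf 1_n)\big)$ and $R_{\max}(t)=\rho\big(G(\mathbf 0)^{-1}\tilde S(t)B(\mathbf 0)\big)$.
   Context: There are $n$ communities. For $t\ge0$ and $i\in[n]$, $s_i(t),x_i(t),o_i(t)\in[0,1]$ denote the susceptible proportion, infected proportion and opinion of community $i$. The disease transmission network is a directed graph $\mathcal G=(\mathcal V,\mathcal E)$ on $n$ nodes with edge weights $\beta_{ij}>0$ if $(v_j,v_i)\in\mathcal E$ (and $\beta_{ij}=0$ otherwise); $\mathcal N_i=\{v_j:(v_j,v_i)\in\mathcal E\}$. The opinion network is a directed graph $\bar{\mathcal G}$ on the same nodes with nonnegative weights $\bar a_{ij}$ and Laplacian $\bar L=\mathrm{diag}(k_1,\dots,k_n)-\bar A$, $[\bar A]_{ij}=\bar a_{ij}$, $k_i=\sum_j\bar a_{ij}$. For $o\in[0,1]^n$ define the matrix $B(o)$ by $[B(o)]_{ij}=\beta_{ij}-(\beta_{ij}-\beta_{\min})o_i$ for $j\in\mathcal N_i$ and $0$ otherwise, and the diagonal matrix $G(o)$ with $[G(o)]_{ii}=\gamma_{\min}+(\gamma_i-\gamma_{\min})o_i$. Let $\tilde S(t)=\mathrm{diag}(s(t))$.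 The model is $\dot s=-\tilde S B(o)x$, $\dot x=\tilde S B(o)x-G(o)x$, $\dot o=(\mathbf 1_n-s)-(\bar L+I_n)o$. Standing assumption: for all $i$, $s_i(0),x_i(0),o_i(0)\in[0,1]$ with $s_i(0)+x_i(0)\le1$, $\gamma_i\ge\gamma_{\min}>0$, $\beta_{ij}\ge\beta_{\min}>0$ for all $j\in\mathcal N_i$, and $\mathcal G$, $\bar{\mathcal G}$ strongly connected. $\rho(\cdot)$ denotes spectral radius. *)

(* Defs.v *)
From HB Require Import structures.
From mathcomp Require Import all_boot all_order all_algebra.
From mathcomp Require Import all_classical all_reals all_analysis.
From mathcomp Require Import complex.
Set Implicit Arguments. Unset Strict Implicit. Unset Printing Implicit Defensive.
Import Order.TTheory GRing.Theory Num.Theory.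
Local Open Scope ring_scope.
Local Open Scope classical_set_scope.

Section Defs.
Variable R : realType.
Variable n : nat.

Definition cmod (z : R[i]) : R :=
  Num.sqrt (complex.Re z ^+ 2 + complex.Im z ^+ 2).

Definition eigenvalueC (A : 'M[R]_n) (l : R[i]) : Prop :=
  exists2 v : 'cV[R[i]]_n, v != 0 &
    map_mx (fun a : R => a%:C%C) A *m v = l *: v.

Definition spectral_radius (A : 'M[R]_n) : R :=
  sup [set cmod l | l in eigenvalueC A].

Definition edge_rel (w : 'M[R]_n) : rel 'I_n := fun j i => 0 < w i j.
Definition strongly_connected (w : 'M[R]_n) : Prop :=
  forall i j : 'I_n, connect (edge_rel w) i j.

Definition Bmat (beta : 'M[R]_n) (bmin : R) (o : 'I_n -> R) : 'M[R]_n :=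
  \matrix_(i, j) (if 0 < beta i j then beta i j - (beta i j - bmin) * o i
                  else 0).

Definition Gmat (gamma : 'I_n -> R) (gmin : R) (o : 'I_n -> R) : 'M[R]_n :=
  \matrix_(i, j) ((i == j)%:R * (gmin + (gamma i - gmin) * o i)).

Definition laplacian (abar : 'M[R]_n) : 'M[R]_n :=
  \matrix_(i, j) ((i == j)%:R * (\sum_k abar i k)) - abar.

Definition Stilde (s : 'I_n -> R) : 'M[R]_n := \matrix_(i, j) ((i == j)%:R * s i).

Definition Rnum beta bmin gamma gmin (s o : 'I_n -> R) : R :=
  spectral_radius (invmx (Gmat gamma gmin o) *m Stilde s *m Bmat beta bmin o).

End Defs.

(* Main.v *)
Require Import Defs.
From HB Require Import structures.
From mathcomp Require Import all_boot all_order all_algebra.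
From mathcomp Require Import all_classical all_reals all_analysis.
From mathcomp Require Import complex.
From mathcomp Require Import ring lra.
Import Order.TTheory GRing.Theory Num.Theory.
Import numFieldNormedType.Exports.
Local Open Scope ring_scope.
Local Open Scope classical_set_scope.
Section RI.
Variable R : realType.

Lemma real_ind (a b : R) (P : R -> Prop) : a <= b -> P a ->
  (forall t, a < t <= b -> (forall u, a <= u < t -> P u) -> P t) ->
  (forall t, a <= t < b -> (forall u, a <= u <= t -> P u) ->
     exists2 d, 0 < d & forall u, t < u < t + d -> u <= b -> P u) ->
  forall t, a <= t <= b -> P t.
Proof.
move=> ab Pa Hl Hr.
pose S := [set t | a <= t <= b /\ forall u, a <= u <= t -> P u].
have Sa : S a.
  split; first by rewrite lexx ab.
  by move=> u /andP[h1 h2]; have -> : u = a by apply/eqP; rewrite eq_le h1 h2.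
have hs : has_sup S.
  split; first by exists a.
  by exists b => t [/andP[]].
set tau := sup S.
have tau_ub : forall t, S t -> t <= tau by move=> t St; exact: sup_upper_bound.
have atau : a <= tau by exact: tau_ub.
have taub : tau <= b by apply: ge_sup; [exists a | move=> t [/andP[]]].
have below : forall u, a <= u < tau -> P u.
  move=> u /andP[au ut].
  have [e Se he] := sup_adherent (ltac:(by rewrite subr_gt0) : 0 < tau - u) hs.
  rewrite opprB addrCA subrr addr0 in he.
  by case: Se => _ /(_ u); apply; rewrite au ltW.
have Ptau : P tau.
  have [<-|ltat] := eqVneq a tau; first exact: Pa.
  apply: Hl => //; by rewrite lt_neqAle ltat atau taub.
have all_tau : forall u, a <= u <= tau -> P u.
  move=> u /andP[au ut]; have [->|ne] := eqVneq u tau; first exact Ptau.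
  by apply: below; rewrite au lt_neqAle ne ut.
have tau_b : tau = b.
  apply/eqP; rewrite eq_le taub /=; rewrite leNgt; apply/negP => tb.
  have [d d0 Hd] := Hr tau (ltac:(by rewrite atau tb)) all_tau.
  pose t' := tau + Num.min d (b - tau) / 2.
  have m0 : 0 < Num.min d (b - tau) by rewrite lt_min d0 subr_gt0 tb.
  have tt' : tau < t' by rewrite /t' ltrDl divr_gt0.
  have t'b : t' <= b.
    have : Num.min d (b - tau) <= b - tau by rewrite ge_min lexx orbT.
    rewrite /t'; lra.
  have St' : S t'.
    split; first by rewrite t'b andbT (le_trans atau) // ltW.
    move=> u /andP[au ut']; have [ut|tu] := leP u tau.
      by apply: all_tau; rewrite au ut.
    apply: Hd; last by apply: le_trans t'b.
    rewrite tu /= (le_lt_trans ut') // /t'.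
    have : Num.min d (b - tau) <= d by rewrite ge_min lexx.
    lra.
  by have := tau_ub _ St'; rewrite leNgt tt'.
move=> t /andP[at0 tb]; apply: all_tau; by rewrite at0 tau_b tb.
Qed.
End RI.
Section PF.
Variable R : realType.
Variable n : nat.

Lemma exists_min (T : finType) (f : T -> R) (x0 : T) : exists x, forall y, f x <= f y.
Proof.
have [x _ H] := @arg_minP _ _ T x0 predT f isT.
by exists x => y; apply: H.
Qed.

Definition Nm (A : 'M[R]_n) : R := \sum_i \sum_j `|A i j|.

Lemma Nm_ge0 (A : 'M[R]_n) : 0 <= Nm A.
Proof. by apply: sumr_ge0 => i _; apply: sumr_ge0 => j _. Qed.

Lemma Nm_entry (A : 'M[R]_n) i j : `|A i j| <= Nm A.
Proof.
rewrite /Nm (bigD1 i) //= (bigD1 j) //= -addrA lerDl.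
apply: addr_ge0; first by apply: sumr_ge0.
by apply: sumr_ge0 => k _; apply: sumr_ge0.
Qed.

Lemma Nm_row (A : 'M[R]_n) i : \sum_j `|A i j| <= Nm A.
Proof.
rewrite /Nm [X in _ <= X](bigD1 i) //= lerDl.
by apply: sumr_ge0 => k _; apply: sumr_ge0.
Qed.

Lemma NmD (A B : 'M[R]_n) : Nm (A + B) <= Nm A + Nm B.
Proof.
rewrite /Nm -big_split /=; apply: ler_sum => i _.
rewrite -big_split /=; apply: ler_sum => j _.
by rewrite mxE ler_normD.
Qed.

Lemma NmZ c (A : 'M[R]_n) : Nm (c *: A) = `|c| * Nm A.
Proof.
rewrite /Nm mulr_sumr; apply: eq_bigr => i _.
rewrite mulr_sumr; apply: eq_bigr => j _.
by rewrite mxE normrM.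
Qed.

Lemma NmM (A B : 'M[R]_n) : Nm (A *m B) <= Nm A * Nm B.
Proof.
rewrite /Nm mulr_suml; apply: ler_sum => i _.
apply: le_trans (_ : \sum_j \sum_k `|A i k| * `|B k j| <= _).
  apply: ler_sum => j _; rewrite mxE.
  apply: le_trans (ler_norm_sum _ _ _) _.
  by apply: ler_sum => k _; rewrite normrM.
rewrite exchange_big /= mulr_suml; apply: ler_sum => k _.
rewrite -mulr_sumr; apply: ler_wpM2l => //.
exact: Nm_row.
Qed.

Lemma min_entry (Y X0 Z : 'M[R]_n) (c : R) :
  (forall i j, 0 <= X0 i j) -> (forall i j, 0 <= Z i j) -> 0 <= c ->
  c * Nm Z < 1 -> Y = X0 + c *: (Z *m Y) -> forall i j, 0 <= Y i j.
Proof.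
move=> X0p Zp c0 cN eY i0 j0.
have [[i j] Hm] := exists_min _ (fun p : 'I_n * 'I_n => Y p.1 p.2) (i0, j0).
rewrite leNgt; apply/negP => neg.
have m0 : Y i j < 0 by apply: le_lt_trans (Hm (i0, j0)) neg.
have : Y i j >= c * (Nm Z * Y i j).
  rewrite {2}eY !mxE; apply: le_trans (_ : 0 + c * (\sum_k Z i k * Y k j) <= _).
    rewrite add0r; apply: ler_wpM2l => //.
    apply: le_trans (_ : \sum_k Z i k * Y i j <= _).
      rewrite -mulr_suml; apply: ler_wnM2r; first exact: ltW.
      apply: le_trans (Nm_row Z i); apply: ler_sum => k _.
      by rewrite ger0_norm.
    apply: ler_sum => k _; apply: ler_wpM2l => //.
    exact: (Hm (k, j)).
  by apply: lerD => //; rewrite mxE.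
have NZ0 := Nm_ge0 Z.
rewrite mulrA; set q := c * Nm Z => h.
have q0 : 0 <= q by apply: mulr_ge0.
have : (1 - q) * Y i j >= 0 by rewrite mulrBl mul1r subr_ge0.
rewrite pmulr_rge0 ?subr_gt0 //; by rewrite leNgt m0.
Qed.


Lemma resolvent (C : 'M[R]_n) (t u : R) :
  (1%:M - t *: C) \in unitmx -> (1%:M - u *: C) \in unitmx ->
  invmx (1%:M - u *: C) = invmx (1%:M - t *: C) +
     (u - t) *: (invmx (1%:M - t *: C) *m C *m invmx (1%:M - u *: C)).
Proof.
move=> Ut Uu.
have E : (u - t) *: C = (1%:M - t *: C) - (1%:M - u *: C).
  by apply/matrixP => i j; rewrite !mxE; ring.
rewrite scalemxAl scalemxAr E mulmxBr mulmxBl mulVmx // mul1mx.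
rewrite -mulmxA mulmxV // mulmx1.
by rewrite [RHS]addrC subrK.
Qed.

Lemma CW (B : 'M[R]_n) (w : 'cV[R]_n) (r : R) : 0 < r ->
  (forall i j, 0 <= B i j) -> (forall i, 0 <= w i 0) -> w != 0 ->
  (forall i, r * w i 0 <= (B *m w) i 0) ->
  exists mu, exists2 v : 'cV[R]_n, v != 0 & r <= mu /\ B *m v = mu *: v.
Proof.
move=> r0 Bp wp w0 Bw.
set C := r^-1 *: B.
have Cp : forall i j, 0 <= C i j by move=> i j; rewrite mxE mulr_ge0 // invr_ge0 ltW.
have [[t /andP[t0 t1] dt]|nodet] := pselect (exists2 t, 0 < t <= 1 & \det (1%:M - t *: C) = 0).
  have /det0P [v v0 hv] : \det (1%:M - t *: C)^T == 0 by rewrite det_tr dt.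
  exists (r / t); exists v^T.
    by apply: contra v0 => /eqP h; rewrite -[v]trmxK h linear0.
  split; first by rewrite ler_pdivlMr // ger_pMr.
  have : (1%:M - t *: C) *m v^T = 0 by rewrite -[_ *m _]trmxK trmx_mul trmxK hv linear0.
  rewrite mulmxBl mul1mx => /eqP; rewrite subr_eq0 -scalemxAl => /eqP hv'.
  rewrite /C -scalemxAl in hv'.
  apply: (@scalerI _ _ (t / r)); first by rewrite mulf_neq0 // ?invr_eq0 gt_eqF.
  rewrite scalerA (_ : t / r * (r / t) = 1); last by rewrite mulrA divfK ?gt_eqF // divff ?gt_eqF.
  by rewrite scale1r [RHS]hv' scalerA mulrC.
exfalso.
have U : forall t, 0 <= t <= 1 -> (1%:M - t *: C) \in unitmx.
  move=> t /andP[t0 t1]; rewrite unitmxE unitfE.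
  have [->|tn0] := eqVneq t 0; first by rewrite scale0r subr0 det1 oner_neq0.
  apply/eqP => dt; apply: nodet; exists t => //.
  by rewrite lt_neqAle eq_sym tn0 t0.
pose Mi t := invmx (1%:M - t *: C).
pose P t := forall i j, 0 <= Mi t i j.
have NC := Nm_ge0 C.
have P1 : P 1.
  apply: (@real_ind R 0 1 P) => //; last by rewrite ler01 lexx.
  - move=> i j; rewrite /Mi scale0r subr0 invmx1 mxE; by case: (i == j).
  - move=> t /andP[t0 t1] Hb.
    have Ut := U t (ltac:(by rewrite ltW)).
    set Mt := Mi t.
    have a0 := Nm_ge0 (Mt *m C); have b0 := Nm_ge0 Mt.
    set a := Nm (Mt *m C) in a0 *; set b := Nm Mt in b0 *.
    set q := 2 * a + 4 * (b * Nm C) + 2.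
    have q0 : 0 < q by rewrite /q; have := mulr_ge0 b0 NC; lra.
    set h := Num.min t q^-1.
    have h0 : 0 < h by rewrite lt_min t0 invr_gt0 q0.
    have ht : h <= t by rewrite ge_min lexx.
    have hq : h * q <= 1 by rewrite -ler_pdivlMr // div1r ge_min lexx orbT.
    set u := t - h.
    have u0 : 0 <= u < t by rewrite /u; apply/andP; split; lra.
    have Uu := U u (ltac:(by move: u0 t1; rewrite /u; move=> /andP[? ?] ?; apply/andP; split; lra)).
    have Pu := Hb u u0.
    have e1 : Mt = Mi u + (t - u) *: (Mi u *m C *m Mt) := resolvent _ _ _ Uu Ut.
    have e2 : Mi u = Mt + (u - t) *: (Mt *m C *m Mi u) := resolvent _ _ _ Ut Uu.
    have Nu : Nm (Mi u) <= 2 * b.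
      have : Nm (Mi u) <= b + h * (a * Nm (Mi u)).
        rewrite {1}e2; apply: le_trans (NmD _ _) _; apply: lerD => //.
        rewrite NmZ; have -> : `|u - t| = h.
          by rewrite (_ : u - t = - h) ?normrN ?ger0_norm ?ltW // /u; ring.
        by apply: ler_wpM2l; [exact: ltW | exact: NmM].
      have hla : h * a <= 1/2.
        have : h * (2 * a) <= h * q by apply: ler_wpM2l; [exact: ltW | rewrite /q; have := mulr_ge0 b0 NC; lra].
        move: hq; nra.
      have nu0 := Nm_ge0 (Mi u).
      rewrite mulrA; nra.
    apply: (min_entry _ (Mi u) (Mi u *m C) (t - u)) => //.
    + by move=> i j; rewrite mxE; apply: sumr_ge0 => k _; apply: mulr_ge0.
    + by rewrite subr_ge0 ltW //; case/andP: u0.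
    + have -> : t - u = h by rewrite /u; ring.
      apply: le_lt_trans (_ : h * (2 * b * Nm C) < 1).
        apply: ler_wpM2l; first exact: ltW.
        by apply: le_trans (NmM _ _) _; apply: ler_wpM2r.
      have : h * (4 * (b * Nm C)) <= h * q by apply: ler_wpM2l; [exact: ltW | rewrite /q; lra].
      have := mulr_ge0 b0 NC; move: hq h0; nra.
  - move=> t /andP[t0 t1] Hb.
    have Ut := U t (ltac:(by rewrite t0 ltW)).
    have Pt : P t by apply: Hb; rewrite t0 lexx.
    set K := Nm (Mi t *m C).
    have K0 : 0 <= K by apply: Nm_ge0.
    exists (K + 1)^-1; first by rewrite invr_gt0; lra.
    move=> u /andP[tu ud] u1.
    have Uu := U u (ltac:(by rewrite u1 andbT; apply: le_trans t0 (ltW tu))).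
    apply: (min_entry _ (Mi t) (Mi t *m C) (u - t)) => //.
    + by move=> i j; rewrite mxE; apply: sumr_ge0 => k _; apply: mulr_ge0.
    + by rewrite subr_ge0 ltW.
    + have : (u - t) * (K + 1) < 1 by rewrite -ltr_pdivlMr; [lra | lra].
      rewrite -/K; move: tu K0; nra.
    + exact: resolvent.
have U1 := U 1 (ltac:(by rewrite ler01 lexx)).
have eq : w = Mi 1 *m ((1%:M - 1 *: C) *m w) by rewrite mulmxA mulVmx // mul1mx.
have neg : forall i, ((1%:M - 1 *: C) *m w) i 0 <= 0.
  move=> i; rewrite scale1r mulmxBl mul1mx !mxE subr_le0.
  have -> : \sum_j C i j * w j 0 = r^-1 * (B *m w) i 0.
    by rewrite mxE mulr_sumr; apply: eq_bigr => j _; rewrite mxE mulrA.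
  by rewrite -(ler_pM2l r0) mulrA mulfV ?gt_eqF // mul1r.
have wz : w = 0.
  apply/matrixP => i j; rewrite (ord1 j) mxE; apply/eqP; rewrite eq_le wp andbT.
  rewrite eq mxE; apply: sumr_le0 => k _.
  by apply: mulr_ge0_le0; [exact: P1 | exact: neg].
by move/eqP: w0.
Qed.
End PF.
Arguments Nm {R n}.
Arguments CW {R n B w r}.
Arguments Nm_ge0 {R n}.

Section Rho.
Variable R : realType.
Variable n : nat.
Local Open Scope complex_scope.

Lemma cmodE (z : R[i]) : cmod z = Normc.normc z.
Proof. by case: z. Qed.

Lemma cmod_ge0 (z : R[i]) : 0 <= cmod z.
Proof. by case: z => a b; rewrite /cmod sqrtr_ge0. Qed.

Lemma cmodM (x y : R[i]) : cmod (x * y) = cmod x * cmod y.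
Proof. by rewrite !cmodE Normc.normcM. Qed.

Lemma cmodR (a : R) : cmod (a%:C) = `|a|.
Proof. by rewrite /cmod /= expr0n /= addr0 sqrtr_sqr. Qed.

Lemma cmod_eq0 (z : R[i]) : (cmod z == 0) = (z == 0).
Proof.
apply/eqP/eqP => [|->]; first by rewrite cmodE; exact: Normc.eq0_normc.
by rewrite cmodR normr0.
Qed.

Lemma cmod_sum (I : Type) (r : seq I) (F : I -> R[i]) :
  cmod (\sum_(i <- r) F i) <= \sum_(i <- r) cmod (F i).
Proof.
apply: (big_ind2 (fun x y => cmod x <= y)).
- by rewrite cmodR normr0.
- move=> a1 a2 b1 b2 h1 h2; rewrite cmodE.
  apply: le_trans (@le_normcD R a1 b1) _.
  by rewrite -!cmodE lerD.
- by [].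
Qed.

Lemma eig_bound (B : 'M[R]_n) l : eigenvalueC B l -> cmod l <= Nm B.
Proof.
case=> v v0 hv.
set c := fun j => cmod (v j 0).
have c0 : forall j, 0 <= c j by move=> j; apply: cmod_ge0.
have S0 : 0 < \sum_j c j.
  have [j vj] : exists j, v j 0 != 0.
    apply/existsP; move: v0; apply: contraR; rewrite negb_exists => /forallP H.
    apply/eqP/matrixP => i k; rewrite (ord1 k) mxE; apply/eqP.
    by move: (H i); rewrite negbK.
  rewrite (bigD1 j) //=; apply: lt_le_trans (_ : c j <= _).
    by rewrite lt_neqAle eq_sym cmod_eq0 vj c0.
  by rewrite lerDl sumr_ge0.
have : cmod l * \sum_j c j <= Nm B * \sum_j c j.
  rewrite mulr_sumr.
  apply: le_trans (_ : \sum_i \sum_j `|B i j| * c j <= _).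
    apply: ler_sum => i _.
    move: (hv) => /matrixP /(_ i 0); rewrite !mxE /c -cmodM => <-.
    apply: le_trans (cmod_sum _ _ _) _; apply: ler_sum => j _.
    by rewrite cmodM mxE cmodR.
  rewrite /Nm mulr_suml; apply: ler_sum => i _.
  rewrite mulr_suml; apply: ler_sum => j _.
  apply: ler_wpM2l => //.
  by rewrite (bigD1 j) //= lerDl sumr_ge0.
by rewrite ler_pM2r.
Qed.

Lemma eig_from_CW (A B : 'M[R]_n) l :
  (forall i j, 0 <= A i j) -> (forall i j, A i j <= B i j) ->
  eigenvalueC A l -> 0 < cmod l ->
  exists2 m, eigenvalueC B m & cmod l <= cmod m.
Proof.
move=> Ap AB [v v0 hv] l0.
set w : 'cV[R]_n := \col_j cmod (v j 0).
have wp : forall i, 0 <= w i 0 by move=> i; rewrite mxE cmod_ge0.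
have w0 : w != 0.
  have [j vj] : exists j, v j 0 != 0.
    apply/existsP; move: v0; apply: contraR; rewrite negb_exists => /forallP H.
    apply/eqP/matrixP => i k; rewrite (ord1 k) mxE; apply/eqP.
    by move: (H i); rewrite negbK.
  apply/eqP => /matrixP /(_ j 0); rewrite !mxE => /eqP.
  by rewrite cmod_eq0 (negbTE vj).
have Bp : forall i j, 0 <= B i j by move=> i j; apply: le_trans (AB i j).
have Bw : forall i, cmod l * w i 0 <= (B *m w) i 0.
  move=> i; rewrite /w !mxE -cmodM.
  move: (hv) => /matrixP /(_ i 0); rewrite !mxE => <-.
  apply: le_trans (cmod_sum _ _ _) _; apply: ler_sum => j _.
  rewrite cmodM mxE cmodR ger0_norm // mxE.
  by apply: ler_wpM2r; [apply: cmod_ge0 | apply: AB].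
have [mu [u u0 [lmu hu]]] := CW l0 Bp wp w0 Bw.
exists mu%:C.
  exists (map_mx (fun a : R => a%:C) u).
    apply: contra u0 => /eqP /matrixP H; apply/eqP/matrixP => i j.
    by have := H i j; rewrite !mxE => -[].
  apply/matrixP => i j; rewrite !mxE.
  rewrite -rmorphM; move: (hu) => /matrixP /(_ i j); rewrite !mxE => <-.
  rewrite rmorph_sum; apply: eq_bigr => k _; by rewrite !mxE rmorphM.
by rewrite cmodR ger0_norm // (le_trans (cmod_ge0 l)).
Qed.

Lemma rho_mono (A B : 'M[R]_n) :
  (forall i j, 0 <= A i j) -> (forall i j, A i j <= B i j) ->
  spectral_radius A <= spectral_radius B.
Proof.
move=> Ap AB; rewrite /spectral_radius.
set SA := [set cmod l | l in eigenvalueC A].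
set SB := [set cmod l | l in eigenvalueC B].
have ubB : ubound SB (Nm B) by move=> y [l hl <-]; apply: eig_bound.
have supB0 : 0 <= sup SB.
  have [[y hy]|ne] := pselect (SB !=set0).
    have [l hl _] := hy; apply: le_trans (cmod_ge0 l) _.
    apply: sup_upper_bound; last by exists l.
    by split; [exists y | exists (Nm B)].
  have -> : SB = set0 by apply/seteqP; split => // x Hx; apply: ne; exists x.
  by rewrite sup0.
have [neA|ne] := pselect (SA !=set0); last first.
  have -> : SA = set0 by apply/seteqP; split => // x Hx; apply: ne; exists x.
  by rewrite sup0.
apply: ge_sup => // y [l hl <-].
have [l0|l0] := eqVneq (cmod l) 0; first by rewrite l0.
have lpos : 0 < cmod l by rewrite lt_neqAle eq_sym l0 cmod_ge0.
have [m hm lm] := eig_from_CW _ _ _ Ap AB hl lpos.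
apply: le_trans lm _.
apply: sup_upper_bound; last by exists m.
by split; [exists (cmod m); exists m | exists (Nm B)].
Qed.

End Rho.

Section ODE.
Variable R : realType.

Lemma cont_lt (f : R -> R) (x z : R) : {within [set t | 0 <= t], continuous f} -> 0 <= x -> f x < z ->
  exists2 d, 0 < d & forall u, 0 <= u -> `|u - x| < d -> f u < z.
Proof.
move=> cf x0 fz.
have := (subspace_continuousP _ f).1 cf x x0.
move=> /cvgr_lt /(_ z fz).
rewrite near_withinE => /nbhs_ballP [e e0 He].
exists e => // u u0 ux; apply: He => //.
by rewrite /ball /= distrC.
Qed.

Lemma cont_gt (f : R -> R) (x z : R) : {within [set t | 0 <= t], continuous f} -> 0 <= x -> z < f x ->
  exists2 d, 0 < d & forall u, 0 <= u -> `|u - x| < d -> z < f u.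
Proof.
move=> cf x0 fz.
have := (subspace_continuousP _ f).1 cf x x0.
move=> /cvgr_gt /(_ z fz).
rewrite near_withinE => /nbhs_ballP [e e0 He].
exists e => // u u0 ux; apply: He => //.
by rewrite /ball /= distrC.
Qed.

Lemma deriv_gt (f : R -> R) (t d c : R) : is_derive t 1 f d -> c < d ->
  exists2 e, 0 < e & forall h, h != 0 -> `|h| < e -> c < h^-1 * (f (h + t) - f t).
Proof.
move=> [Hd Hv] cd.
have : (fun h => h^-1 *: ((f \o shift t) (h *: 1) - f t)) @ 0^' --> d by rewrite -Hv; exact: Hd.
move=> /cvgr_gt /(_ c cd).
rewrite near_withinE => /nbhs_ballP [e e0 He].
exists e => // h h0 he.
have := He h; rewrite /ball /= sub0r normrN => /(_ he h0).
by rewrite -[h%:A]/(h * 1) mulr1.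
Qed.


Lemma fin_delta (n : nat) (Q : 'I_n -> R -> Prop) :
  (forall j d d', 0 < d' <= d -> Q j d -> Q j d') ->
  (forall j, exists2 d, 0 < d & Q j d) -> exists2 d, 0 < d & forall j, Q j d.
Proof.
move=> Qm HQ.
have [D HD] : {D : 'I_n -> R & forall j, 0 < D j /\ Q j (D j)}.
  apply: (@choice _ _ (fun j d => 0 < d /\ Q j d)) => j.
  by have [d d0 Qd] := HQ j; exists d.
exists (\big[Num.min/1]_j D j).
  by elim/big_ind: _ => // [x y x0 y0|j _]; [rewrite lt_min x0 y0 | case: (HD j)].
move=> j; apply: (Qm j (D j)); last by case: (HD j).
apply/andP; split.
  by elim/big_ind: _ => // [x y x0 y0|k _]; [rewrite lt_min x0 y0 | case: (HD k)].
by rewrite (bigD1 j) //= ge_min lexx.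
Qed.

Lemma coop (n : nat) (y dy : 'I_n -> R -> R) :
  (forall i, {within [set t : R | 0 <= t], continuous (y i)}) ->
  (forall i, 0 <= y i 0) ->
  (forall i (t : R), 0 < t -> is_derive t 1 (y i) (dy i t)) ->
  (forall T : R, 0 < T -> exists2 K : R, 0 <= K & forall (t : R) i (phi : R), 0 < t <= T -> 0 < phi ->
       (forall j, - phi <= y j t) -> y i t = - phi -> - (K * phi) <= dy i t) ->
  forall (t : R) i, 0 <= t -> 0 <= y i t.
Proof.
move=> cy y0 dyH KH t i t0.
have [K K0 HK] := KH (t + 1) (ltac:(lra)).
set L := 2 * K + 2.
have L0 : 0 < L by rewrite /L; lra.
suff key : forall eps, 0 < eps -> forall u, 0 <= u <= t + 1 ->
    forall j, - (eps * expR (L * u)) < y j u.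
  rewrite leNgt; apply/negP => yneg.
  have E0 := expR_gt0 (L * t).
  set eps := - y i t / 2 / expR (L * t).
  have eps0 : 0 < eps by rewrite /eps divr_gt0 //; lra.
  have := key eps eps0 t (ltac:(apply/andP; split; lra)) i.
  rewrite /eps divfK ?gt_eqF //; lra.
move=> eps eps0.
apply: (@real_ind R 0 (t + 1) (fun u => forall j, - (eps * expR (L * u)) < y j u)).
- lra.
- move=> j; rewrite mulr0 expR0 mulr1; have := y0 j; lra.
- move=> u /andP[u0 uT] Hb.
  set phi := eps * expR (L * u).
  have phi0 : 0 < phi by rewrite mulr_gt0 ?expR_gt0.
  have ge : forall j, - phi <= y j u.
    move=> j; rewrite leNgt; apply/negP => lt.
    have [d d0 Hd] := cont_lt _ _ _ (cy j) (ltW u0) lt.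
    set v := Num.max 0 (u - d / 2).
    have v0 : 0 <= v by rewrite le_max lexx.
    have vl : u - d / 2 <= v by rewrite le_max lexx orbT.
    have vu : v < u by rewrite gt_max u0 /=; lra.
    have vd : `|v - u| < d by rewrite distrC ger0_norm ?subr_ge0 ?ltW //; lra.
    have h1 := Hd v v0 vd.
    have h2 := Hb v (ltac:(by rewrite v0 vu)) j.
    have : expR (L * v) <= expR (L * u) by rewrite ler_expR ler_pM2l // ltW.
    move=> /(ler_wpM2l (ltW eps0)); rewrite -/phi; lra.
  move=> j; rewrite lt_neqAle ge andbT; apply/negP => /eqP Heq.
  have dd := HK u j phi (ltac:(by rewrite u0 uT)) phi0 ge (esym Heq).
  have cd : - ((K + 1) * phi) < dy j u by move: dd; rewrite mulrDl mul1r; lra.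
  have [e e0 He] := deriv_gt _ _ _ _ (dyH j u u0) cd.
  set m := Num.min u (Num.min (1 / (4 * L)) e).
  have m0 : 0 < m by rewrite !lt_min u0 e0 divr_gt0 //; lra.
  have mu : m <= u by rewrite ge_min lexx.
  have me : m <= e by rewrite !ge_min lexx !orbT.
  have mL : m <= 1 / (4 * L) by rewrite !ge_min lexx orbT.
  have mL' : L * m <= 1/4.
    by move: mL; rewrite ler_pdivlMr ?mulr_gt0 //; lra.
  set h := - (m / 2).
  have hq := He h (ltac:(rewrite /h oppr_eq0 gt_eqF //; lra))
                 (ltac:(rewrite /h normrN ger0_norm; lra)).
  have Hv := Hb (h + u) (ltac:(apply/andP; split; rewrite /h; lra)) j.
  rewrite mulrDr expRD mulrCA -/phi in Hv.
  set E := expR (L * h) in Hv.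
  have E1 : 1 + L * h <= E := expR_ge1Dx _.
  have E2 : E * (1 - L * h) <= 1.
    have : 1 + - (L * h) <= expR (- (L * h)) := expR_ge1Dx _.
    rewrite expRN -/E => H.
    have E0 : 0 < E by apply: expR_gt0.
    have EV : E * E^-1 = 1 by rewrite mulfV // gt_eqF.
    by rewrite -[X in _ <= X]EV ler_pM2l.
  set diff := y j (h + u) - y j u.
  have hneg : h < 0 by rewrite /h; lra.
  have hd : h * (h^-1 * diff) = diff by rewrite mulrA mulfV ?mul1r // lt_eqF.
  set q := h^-1 * diff in hq hd.
  have c1 : diff < - ((K + 1) * phi) * h.
    have := mulr_gt0 (ltac:(rewrite subr_gt0; exact: hq) : 0 < q - - ((K + 1) * phi))
                     (ltac:(rewrite oppr_gt0; exact: hneg) : 0 < - h).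
    rewrite -hd; lra.
  have c2 : phi - E * phi < diff by rewrite /diff -Heq; lra.
  have eLh : L * h = - (L * m / 2) by rewrite /h; ring.
  have Lm0 : 0 < L * m := mulr_gt0 L0 m0.
  have c3 : - (L * h) / 2 <= 1 - E.
    have p : 0 <= (E - 1/2) * (- (L * h)).
      by apply: mulr_ge0; move: E1; rewrite eLh; lra.
    move: p E2; rewrite mulrBr mulrBl; lra.
  have c4 : phi * (- (L * h) / 2) <= phi * (1 - E) by rewrite ler_pM2l.
  have c5 : phi * (- (L * h) / 2) = - ((K + 1) * phi) * h by rewrite /L; field.
  lra.
- move=> u /andP[u0 uT] Hb.
  have Pu := Hb u (ltac:(by rewrite u0 lexx)).
  have [d d0 Hd] := fin_delta _ (fun j d => forall v, 0 <= v -> `|v - u| < d ->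
                        - (eps * expR (L * u)) < y j v)
     (fun j d d' dd H v v0 vd => H v v0 (lt_le_trans vd (proj2 (andP dd))))
     (fun j => cont_gt _ _ _ (cy j) u0 (Pu j)).
  exists d => // v /andP[uv vd] vT j.
  have v0 : 0 <= v by apply: le_trans u0 (ltW uv).
  have := Hd j v v0 (ltac:(rewrite gtr0_norm ?subr_gt0 //; lra)).
  have : expR (L * u) <= expR (L * v) by rewrite ler_expR ler_pM2l // ltW.
  move=> /(ler_wpM2l (ltW eps0)); lra.
Qed.

End ODE.

Section Main.
Variable R : realType.
Variable n : nat.

Lemma Stilde_diag (s : 'I_n -> R) : Stilde s = diag_mx (\row_k s k).
Proof. by apply/matrixP => i j; rewrite !mxE mulrC mulr_natr. Qed.

Lemma Gmat_diag gamma gmin (o : 'I_n -> R) :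
  Gmat gamma gmin o = diag_mx (\row_k (gmin + (gamma k - gmin) * o k)).
Proof. by apply/matrixP => i j; rewrite !mxE mulrC mulr_natr. Qed.

Lemma invmx_diag (d : 'I_n -> R) : (forall k, d k != 0) ->
  invmx (diag_mx (\row_k d k)) = diag_mx (\row_k (d k)^-1).
Proof.
move=> d0.
have e : diag_mx (\row_k d k) *m diag_mx (\row_k (d k)^-1) = 1%:M.
  rewrite mulmx_diag; apply/matrixP => i j; rewrite !mxE mulfV //.
have [U _] := mulmx1_unit e.
by rewrite -[RHS]mul1mx -(mulVmx U) -mulmxA e mulmx1.
Qed.

Lemma Mentry beta bmin gamma gmin (s o : 'I_n -> R) i j :
  (forall k, gmin + (gamma k - gmin) * o k != 0) ->
  (invmx (Gmat gamma gmin o) *m Stilde s *m Bmat beta bmin o) i j =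
  (gmin + (gamma i - gmin) * o i)^-1 * (s i * Bmat beta bmin o i j).
Proof.
move=> G0.
by rewrite Gmat_diag (invmx_diag _ G0) Stilde_diag mulmx_diag mul_diag_mx !mxE mulrA.
Qed.

Lemma SBx (s : 'I_n -> R) (M : 'M[R]_n) (xv : 'I_n -> R) i :
  (Stilde s *m M *m \col_k xv k) i 0 = s i * \sum_j M i j * xv j.
Proof.
rewrite Stilde_diag -mulmxA mul_diag_mx !mxE; congr (_ * _).
by apply: eq_bigr => j _; rewrite mxE.
Qed.

Lemma Gx gamma gmin (o xv : 'I_n -> R) i :
  (Gmat gamma gmin o *m \col_k xv k) i 0 = (gmin + (gamma i - gmin) * o i) * xv i.
Proof. by rewrite Gmat_diag mul_diag_mx !mxE. Qed.

Lemma Lo (abar : 'M[R]_n) (ov : 'I_n -> R) i :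
  ((laplacian abar + 1%:M) *m \col_k ov k) i 0 =
  (\sum_k abar i k + 1) * ov i - \sum_j abar i j * ov j.
Proof.
rewrite mxE.
have -> : \sum_j (laplacian abar + 1%:M) i j * (\col_k ov k) j 0 =
    \sum_j ((i == j)%:R * ((\sum_k abar i k + 1) * ov j)) - \sum_j abar i j * ov j.
  rewrite -sumrB; apply: eq_bigr => j _; rewrite !mxE; ring.
congr (_ - _).
set c := (\sum_k abar i k + 1).
rewrite (bigD1 i) //= eqxx mul1r big1 ?addr0 // => j /negbTE.
by rewrite eq_sym => ->; rewrite mul0r.
Qed.

Lemma sum2_ge (F : 'I_n -> 'I_n -> R) i j : (forall a b, 0 <= F a b) ->
  F i j <= \sum_a \sum_b F a b.
Proof.
move=> F0.
rewrite (bigD1 i) //= (bigD1 j) //= -addrA lerDl.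
apply: addr_ge0; first by apply: sumr_ge0.
by apply: sumr_ge0 => k _; apply: sumr_ge0.
Qed.

Lemma Bbound beta bmin (ov : 'I_n -> R) i j :
  `|Bmat beta bmin ov i j| <= (`|beta i j| + `|beta i j - bmin|) * (1 + `|ov i|).
Proof.
rewrite mxE; case: ifP => _; last first.
  by rewrite normr0 mulr_ge0 // ?addr_ge0.
apply: le_trans (ler_normB _ _) _.
rewrite normrM mulrDr mulr1 mulrDl.
have h1 : `|beta i j| <= `|beta i j| + `|beta i j - bmin| by rewrite lerDl.
have h2 : 0 <= `|beta i j| * `|ov i| by apply: mulr_ge0.
lra.
Qed.

Lemma bound1 (f : R -> R) (T : R) : {within [set t | 0 <= t], continuous f} -> 0 <= T ->
  exists2 K, 0 <= K & forall t, 0 <= t <= T -> `|f t| <= K.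
Proof.
move=> cf T0.
have cf' : {within `[0, T], continuous f}.
  by apply: continuous_subspaceW cf => u /=; rewrite in_itv /= => /andP[].
have [c1 _ H1] := EVT_max T0 cf'.
have [c2 _ H2] := EVT_min T0 cf'.
exists (`|f c1| + `|f c2|); first by apply: addr_ge0.
move=> t tT; have tI : t \in `[0, T]%R by rewrite in_itv.
have := H1 _ tI; have := H2 _ tI.
move=> a b.
have h1 := ler_norm (f c1); have h2 := ler_norm (- f c2); rewrite normrN in h2.
have h3 := normr_ge0 (f c1); have h4 := normr_ge0 (f c2).
rewrite ler_norml; apply/andP; split; lra.
Qed.


Lemma bound_fam (f : 'I_n -> R -> R) (T : R) :
  (forall i, {within [set t | 0 <= t], continuous (f i)}) -> 0 <= T ->
  exists2 K, 0 <= K & forall i t, 0 <= t <= T -> `|f i t| <= K.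
Proof.
move=> cf T0.
have [Kf HK] : {Kf : 'I_n -> R & forall i, 0 <= Kf i /\ forall t, 0 <= t <= T -> `|f i t| <= Kf i}.
  apply: (@choice _ _ (fun i K => 0 <= K /\ forall t, 0 <= t <= T -> `|f i t| <= K)) => i.
  by have [K K0 H] := bound1 _ _ (cf i) T0; exists K.
exists (\sum_i Kf i); first by apply: sumr_ge0 => i _; case: (HK i).
move=> i t tT; apply: le_trans (proj2 (HK i) t tT) _.
rewrite (bigD1 i) //= lerDl; apply: sumr_ge0 => k _; by case: (HK k).
Qed.

Lemma frac_le (g1 g2 p1 p2 : R) : 0 < g2 -> g2 <= g1 -> 0 <= p1 -> p1 <= p2 ->
  g1^-1 * p1 <= g2^-1 * p2.
Proof.
move=> g20 g21 p10 p12.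
have g10 : 0 < g1 by apply: lt_le_trans g21.
apply: ler_pM => //; first by rewrite invr_ge0 ltW.
by rewrite lef_pV2.
Qed.

End Main.

Theorem corollary1 (R : realType) (n : nat)
  (beta : 'M[R]_n) (bmin : R) (gamma : 'I_n -> R) (gmin : R)
  (abar : 'M[R]_n)
  (s x o : 'I_n -> R -> R) :
  (* standing assumption *)
  (forall i, 0 <= s i 0 <= 1) ->
  (forall i, 0 <= x i 0 <= 1) ->
  (forall i, 0 <= o i 0 <= 1) ->
  (forall i, s i 0 + x i 0 <= 1) ->
  0 < gmin -> (forall i, gmin <= gamma i) ->
  0 < bmin -> (forall i j, 0 <= beta i j) ->
  (forall i j, 0 < beta i j -> bmin <= beta i j) ->
  (forall i j, 0 <= abar i j) ->
  strongly_connected beta -> strongly_connected abar ->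
  (* (s, x, o) is a solution on t >= 0 *)
  (forall i, {within [set t : R | 0 <= t], continuous (s i)}) ->
  (forall i, {within [set t : R | 0 <= t], continuous (x i)}) ->
  (forall i, {within [set t : R | 0 <= t], continuous (o i)}) ->
  (forall t : R, 0 < t -> forall i,
    let ot := fun k => o k t in
    let xt := \col_k x k t in
    let st := fun k => s k t in
    let BX := (Stilde st *m Bmat beta bmin ot *m xt) i 0 in
    [/\ is_derive t 1 (s i) (- BX),
        is_derive t 1 (x i) (BX - (Gmat gamma gmin ot *m xt) i 0) &
        is_derive t 1 (o i)
          ((1 - s i t) - ((laplacian abar + 1%:M) *m \col_k o k t) i 0)]) ->
  forall t : R, 0 <= t ->
    let st := fun k => s k t in
    let ot := fun k => o k t in
    Rnum beta bmin gamma gmin st (fun=> 1) <= Rnum beta bmin gamma gmin st ot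
    /\ Rnum beta bmin gamma gmin st ot <= Rnum beta bmin gamma gmin st (fun=> 0).
Proof.
move=> Hs0 Hx0 Ho0 Hsx gmin0 Hgam bmin0 Hb0 Hbmin Hab _ _ cs cx co Hder t t0 st ot.
pose BXf i u := (Stilde (fun k => s k u) *m Bmat beta bmin (fun k => o k u) *m \col_k x k u) i 0.
pose Gxf i u := (Gmat gamma gmin (fun k => o k u) *m \col_k x k u) i 0.
pose Lof i u := ((laplacian abar + 1%:M) *m \col_k o k u) i 0.
have D : forall u : R, 0 < u -> forall i,
   [/\ is_derive u 1 (s i) (- BXf i u), is_derive u 1 (x i) (BXf i u - Gxf i u)
     & is_derive u 1 (o i) ((1 - s i u) - Lof i u)].
  by move=> u u0 i; exact: (Hder u u0 i).
set cB := \sum_a \sum_b (`|beta a b| + `|beta a b - bmin|).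
have cB0 : 0 <= cB by apply: sumr_ge0 => a _; apply: sumr_ge0 => b _; apply: addr_ge0.
have Bbnd : forall (ov : 'I_n -> R) Ko i j, 0 <= Ko -> `|ov i| <= Ko ->
    `|Bmat beta bmin ov i j| <= cB * (1 + Ko).
  move=> ov Ko i j Ko0 Hov; apply: le_trans (@Bbound R n beta bmin ov i j) _.
  apply: ler_pM; [by apply: addr_ge0 | by apply: addr_ge0 | | by rewrite lerD2l].
  by apply: (@sum2_ge R n (fun a b => `|beta a b| + `|beta a b - bmin|)) => a b; apply: addr_ge0.
set cG := `|gmin| + \sum_k `|gamma k - gmin|.
have Gbnd : forall (ov : 'I_n -> R) Ko i, 0 <= Ko -> `|ov i| <= Ko ->
    `|gmin + (gamma i - gmin) * ov i| <= cG * (1 + Ko).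
  move=> ov Ko i Ko0 Hov; apply: le_trans (ler_normD _ _) _.
  rewrite normrM.
  have h1 : `|gamma i - gmin| <= \sum_k `|gamma k - gmin|.
    by rewrite (bigD1 i) //= lerDl sumr_ge0.
  have h2 : `|gamma i - gmin| * `|ov i| <= (\sum_k `|gamma k - gmin|) * Ko.
    by apply: ler_pM.
  have h3 : 0 <= \sum_k `|gamma k - gmin| by apply: sumr_ge0.
  have h4 := normr_ge0 gmin.
  have h5 : 0 <= `|gmin| * Ko by apply: mulr_ge0.
  have h6 : 0 <= (\sum_k `|gamma k - gmin|) * Ko by apply: mulr_ge0.
  rewrite /cG mulrDr mulr1 mulrDl; lra.
have s_ge0 : forall u i, 0 <= u -> 0 <= s i u.
  apply: (@coop R n s (fun i u => - BXf i u)) => //.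
  - by move=> i; case/andP: (Hs0 i).
  - by move=> i u u0; case: (D u u0 i).
  move=> T T0.
  have [Ko Ko0 HKo] := @bound_fam R n _ _ co (ltW T0).
  have [Kx Kx0 HKx] := @bound_fam R n _ _ cx (ltW T0).
  exists (n%:R * (cB * (1 + Ko)) * Kx).
    by apply: mulr_ge0 => //; apply: mulr_ge0 => //; apply: mulr_ge0 => //; lra.
  move=> u i phi /andP[u0 uT] phi0 _ Hsi.
  rewrite /BXf SBx Hsi.
  set S := \sum_j _.
  have HS : `|S| <= n%:R * (cB * (1 + Ko)) * Kx.
    apply: le_trans (ler_norm_sum _ _ _) _.
    apply: le_trans (_ : \sum_(j < n) (cB * (1 + Ko)) * Kx <= _).
      apply: ler_sum => j _; rewrite normrM; apply: ler_pM => //.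
        apply: Bbnd => //; apply: HKo; rewrite ltW //.
      by apply: HKx; rewrite ltW.
    by rewrite sumr_const card_ord -[_ *+ n]mulr_natl mulrA lexx.
  have := ler_norm (- S); rewrite normrN => h.
  set K := n%:R * _ * Kx in HS *.
  rewrite mulNr opprK; nra.
have o_le1 : forall u i, 0 <= u -> 0 <= 1 - o i u.
  apply: (@coop R n (fun i u => 1 - o i u) (fun i u => - ((1 - s i u) - Lof i u))).
  - move=> i; apply: within_continuousB => //.
    by apply: continuous_subspaceT => ?; apply: cst_continuous.
  - by move=> i; case/andP: (Ho0 i) => _; rewrite subr_ge0.
  - move=> i u u0; case: (D u u0 i) => _ _ d3.
    have := is_deriveB (is_derive_cst (1 : R) u 1) d3; rewrite sub0r; exact.
  move=> T T0; exists 0 => // u i phi /andP[u0 uT] phi0 Hj Hyi.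
  rewrite mul0r oppr0 /Lof Lo.
  have oi : o i u = 1 + phi by lra.
  have sp := s_ge0 u i (ltW u0).
  have Hsum : \sum_j abar i j * o j u <= \sum_k abar i k * (1 + phi).
    apply: ler_sum => j _; apply: ler_wpM2l => //; have := Hj j; lra.
  rewrite -mulr_suml in Hsum.
  rewrite oi; nra.
have B_ge0 : forall u i j, 0 <= u -> 0 <= Bmat beta bmin (fun k => o k u) i j.
  move=> u i j u0; rewrite mxE; case: ifP => // bp.
  have := Hbmin i j bp; have := o_le1 u i u0 => h1 h2.
  have : 0 <= (beta i j - bmin) * (1 - o i u) by apply: mulr_ge0; lra.
  nra.
have x_ge0 : forall u i, 0 <= u -> 0 <= x i u.
  apply: (@coop R n x (fun i u => BXf i u - Gxf i u)) => //.
  - by move=> i; case/andP: (Hx0 i).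
  - by move=> i u u0; case: (D u u0 i).
  move=> T T0.
  have [Ko Ko0 HKo] := @bound_fam R n _ _ co (ltW T0).
  have [Ks Ks0 HKs] := @bound_fam R n _ _ cs (ltW T0).
  exists (Ks * (n%:R * (cB * (1 + Ko))) + cG * (1 + Ko)).
    apply: addr_ge0; apply: mulr_ge0 => //; try lra.
    by apply: mulr_ge0 => //; apply: mulr_ge0 => //; lra.
    by rewrite /cG; apply: addr_ge0 => //; apply: sumr_ge0.
  move=> u i phi /andP[u0 uT] phi0 Hj Hxi.
  rewrite /BXf /Gxf SBx Gx Hxi.
  set S := \sum_j _.
  have sp := s_ge0 u i (ltW u0).
  have sK : s i u <= Ks by have := HKs i u (ltac:(by rewrite ltW)); rewrite ger0_norm.
  have HS1 : - phi * \sum_j Bmat beta bmin (fun k => o k u) i j <= S.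
    rewrite mulr_sumr; apply: ler_sum => j _; rewrite mulrC.
    by apply: ler_wpM2l; [apply: B_ge0; rewrite ltW | apply: Hj].
  have HS2 : \sum_j Bmat beta bmin (fun k => o k u) i j <= n%:R * (cB * (1 + Ko)).
    apply: le_trans (_ : \sum_(j < n) (cB * (1 + Ko)) <= _); last first.
      by rewrite sumr_const card_ord -[_ *+ n]mulr_natl lexx.
    apply: ler_sum => j _; apply: le_trans (ler_norm _) _.
    by apply: Bbnd => //; apply: HKo; rewrite ltW.
  have HG : `|gmin + (gamma i - gmin) * o i u| <= cG * (1 + Ko).
    by apply: (Gbnd (fun k => o k u)) => //; apply: HKo; rewrite ltW.
  have HG2 := ler_norm (- (gmin + (gamma i - gmin) * o i u)); rewrite normrN in HG2.
  set SB := \sum_j _ in HS1 HS2.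
  set g := gmin + _ in HG HG2 *.
  have SB0 : 0 <= SB by apply: sumr_ge0 => j _; apply: B_ge0; rewrite ltW.
  have e1 : - (Ks * (n%:R * (cB * (1 + Ko))) * phi) <= s i u * S.
    have : s i u * (- phi * SB) <= s i u * S by apply: ler_wpM2l.
    have : Ks * (n%:R * (cB * (1 + Ko))) * phi >= s i u * SB * phi.
      apply: ler_wpM2r; [exact: ltW | apply: ler_pM => //].
    nra.
  have e2 : - (cG * (1 + Ko) * phi) <= - (g * - phi).
    rewrite mulrN opprK -mulNr; apply: (ler_wpM2r (ltW phi0)); lra.
  rewrite mulrDl opprD; lra.
have s_le : forall u i, 0 <= u -> 0 <= s i 0 - s i u.
  apply: (@coop R n (fun i u => s i 0 - s i u) (fun i u => BXf i u)).
  - move=> i; apply: within_continuousB => //.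
    by apply: continuous_subspaceT => ?; apply: cst_continuous.
  - by move=> i; rewrite subrr.
  - move=> i u u0; case: (D u u0 i) => d1 _ _.
    have := is_deriveB (is_derive_cst (s i 0) u 1) d1; rewrite sub0r opprK; exact.
  move=> T T0; exists 0 => // u i phi /andP[u0 uT] phi0 Hj Hyi.
  rewrite mul0r oppr0 /BXf SBx; apply: mulr_ge0; first by apply: s_ge0; rewrite ltW.
  by apply: sumr_ge0 => j _; apply: mulr_ge0; [apply: B_ge0 | apply: x_ge0]; rewrite ltW.
have o_ge0 : forall u i, 0 <= u -> 0 <= o i u.
  apply: (@coop R n o (fun i u => (1 - s i u) - Lof i u)) => //.
  - by move=> i; case/andP: (Ho0 i).
  - by move=> i u u0; case: (D u u0 i).
  move=> T T0; exists 0 => // u i phi /andP[u0 uT] phi0 Hj Hoi.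
  rewrite mul0r oppr0 /Lof Lo Hoi.
  have s1 : s i u <= 1.
    have := s_le u i (ltW u0); case/andP: (Hs0 i) => _; lra.
  have Hsum : \sum_k abar i k * (- phi) <= \sum_j abar i j * o j u.
    by apply: ler_sum => j _; apply: ler_wpM2l.
  rewrite -mulr_suml in Hsum.
  have := sumr_ge0 _ (fun k (_ : true) => Hab i k).
  nra.
have oI : forall k, 0 <= ot k <= 1.
  move=> k; apply/andP; split; first exact: o_ge0.
  by have := o_le1 t k t0; rewrite /ot; lra.
have sI : forall k, 0 <= st k by move=> k; apply: s_ge0.
clearbody st ot.
have gpos : forall (ov : 'I_n -> R) k, 0 <= ov k <= 1 -> gmin <= gmin + (gamma k - gmin) * ov k.
  move=> ov k /andP[? ?]; rewrite lerDl; apply: mulr_ge0 => //; have := Hgam k; lra.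
have gposS : forall (ov : 'I_n -> R) k, 0 <= ov k <= 1 -> 0 < gmin + (gamma k - gmin) * ov k.
  by move=> ov k h; apply: lt_le_trans gmin0 (gpos _ _ h).
have gne : forall (ov : 'I_n -> R), (forall k, 0 <= ov k <= 1) ->
    forall k, gmin + (gamma k - gmin) * ov k != 0.
  by move=> ov Hov k; rewrite gt_eqF // (lt_le_trans gmin0) // gpos.
have one01 : forall k : 'I_n, 0 <= (fun=> 1 : R) k <= 1 by move=> k; rewrite ler01 lexx.
have zero01 : forall k : 'I_n, 0 <= (fun=> 0 : R) k <= 1 by move=> k; rewrite lexx ler01.
have Bo0 : forall i j, 0 <= Bmat beta bmin ot i j.
  move=> i j; have /andP[oi0 oi1] := oI i.
  rewrite mxE; case: ifP => // bp.
  apply: le_trans (_ : 0 <= beta i j - (beta i j - bmin) * 1) _.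
    by rewrite (_ : beta i j - (beta i j - bmin) * 1 = bmin); [exact: ltW | ring].
  rewrite lerD2l lerN2; apply: ler_wpM2l; [by rewrite subr_ge0; apply: Hbmin | exact: oi1].
rewrite /Rnum; split; apply: rho_mono => i j.
- rewrite Mentry; last exact: gne.
  apply: mulr_ge0; first by rewrite invr_ge0; apply: ltW; apply: gposS; exact: one01.
  apply: mulr_ge0 => //; rewrite mxE; case: ifP => // bp.
  rewrite /= (_ : beta i j - (beta i j - bmin) * 1 = bmin); [exact: ltW | ring].
- rewrite !Mentry; try exact: gne.
  have /andP[oi0 oi1] := oI i.
  apply: frac_le.
  + by apply: gposS; exact: oI.
  + rewrite lerD2l; apply: ler_wpM2l; [by rewrite subr_ge0 | exact: oi1].
  + apply: mulr_ge0 => //; rewrite mxE; case: ifP => // bp.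
    rewrite /= (_ : beta i j - (beta i j - bmin) * 1 = bmin); [exact: ltW | ring].
  + apply: ler_wpM2l => //; rewrite !mxE; case: ifP => // bp.
    rewrite /= lerD2l lerN2; apply: ler_wpM2l; [by rewrite subr_ge0; apply: Hbmin | exact: oi1].
- rewrite Mentry; last exact: gne.
  apply: mulr_ge0; first by rewrite invr_ge0; apply: ltW; apply: gposS; exact: oI.
  by apply: mulr_ge0.
- rewrite !Mentry; try exact: gne.
  have /andP[oi0 oi1] := oI i.
  apply: frac_le.
  + by rewrite mulr0 addr0.
  + by rewrite mulr0 addr0 gpos.
  + by apply: mulr_ge0.
  + apply: ler_wpM2l => //; rewrite !mxE; case: ifP => // bp.
    rewrite /= mulr0 subr0 gerBl; apply: mulr_ge0 => //.
    by rewrite subr_ge0; apply: Hbmin.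
Qed.
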